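(* Let $\mathbf v\in\mathbb R^{n\times m}_{<0}$, $\mathbf b\in\mathbb R^n_{<0}$, and let $\mathbf z$ be a competitive allocation for $(\mathbf v,\mathbf b)$ with consumption graph $G=G_{\mathbf z}$ and $\mathbf u=\mathbf u(\mathbf z)$. For each chore $j$ let $n_j\ge1$ be the number of agents adjacent to $j$ in $G$, let $\bar{\mathbf z}$ be the allocation with $\bar z_{i,j}=1/n_j$ if $(i,j)\in G$ and $0$ otherwise, and $\bar u_i=u_i(\bar{\mathbf z}_i)$. Let $N^i$ be the set of agents in the connected component of $i$ in $G$, and for $i'\in N^i$ let $\pi_{i,i'}=\pi(\mathcal P)$ for any path $\mathcal P$ from $i$ to $i'$ in $G$ ($\pi_{i,i}=1$). Then for every agent $i$, $$u_i=\frac{b_i}{\sum_{i'\in N^i}b_{i'}}\sum_{i'\in N^i}\pi_{i,i'}\,\bar u_{i'}.$$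
   Context: Setup: agents $[n]$, chores $[m]$, allocations $\mathbf z\in\mathbb R^{n\times m}_{\ge0}$ with column sums $1$, $u_i(\mathbf z_i)=\sum_jv_{i,j}z_{i,j}$. Competitive allocation for budgets $\mathbf b$: there exist prices $\mathbf p\in\mathbb R^m_{<0}$ such that each $\mathbf z_i$ maximizes $u_i$ over bundles $\mathbf x\in\mathbb R^m_{\ge0}$ with $\sum_jp_jx_j\le b_i$. $G_{\mathbf z}$ has edge $(i,j)$ iff $z_{i,j}>0$. For a path $\mathcal P=(i_1,j_1,i_2,\dots,j_L,i_{L+1})$ alternating agents and chores, $\pi(\mathcal P)=\prod_{k=1}^L|v_{i_k,j_k}|/|v_{i_{k+1},j_k}|$ (for a competitive allocation this is path-independent within $G_{\mathbf z}$). *)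

(* Defs.v *)
From HB Require Import structures.
From mathcomp Require Import all_boot all_order all_algebra.
Set Implicit Arguments. Unset Strict Implicit. Unset Printing Implicit Defensive.
Import Order.TTheory GRing.Theory Num.Theory.
Local Open Scope ring_scope.

Section Chores.
Variables (R : realFieldType) (n m : nat).

Definition util (v : 'M[R]_(n, m)) (i : 'I_n) (x : 'I_m -> R) : R :=
  \sum_(j < m) v i j * x j.

Definition is_allocation (z : 'M[R]_(n, m)) : Prop :=
  (forall i j, 0 <= z i j) /\ (forall j, \sum_(i < n) z i j = 1).

Definition competitive (v : 'M[R]_(n, m)) (b : 'I_n -> R) (z : 'M[R]_(n, m))
  : Prop :=
  is_allocation z /\
  exists p : 'I_m -> R, (forall j, p j < 0) /\
    forall i : 'I_n,
      (\sum_(j < m) p j * z i j <= b i) /\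
      (forall x : 'I_m -> R, (forall j, 0 <= x j) ->
         \sum_(j < m) p j * x j <= b i -> util v i x <= util v i (z i)).

Definition cgraph (z : 'M[R]_(n, m)) : rel ('I_n + 'I_m)%type :=
  fun x y => match x, y with
             | inl i, inr j => 0 < z i j
             | inr j, inl i => 0 < z i j
             | _, _ => false
             end.

Definition agent_comp (z : 'M[R]_(n, m)) (i : 'I_n) : {set 'I_n} :=
  [set i' | connect (cgraph z) (inl i) (inl i')].

(* a path i_1, j_1, i_2, ..., j_L, i_{L+1} starting at agent i_1 is
   encoded as the sequence [(j_1,i_2); ...; (j_L,i_{L+1})] *)
Fixpoint is_walk (z : 'M[R]_(n, m)) (i : 'I_n) (s : seq ('I_m * 'I_n)) : bool :=
  match s with
  | [::] => true
  | (j, i2) :: s' => [&& 0 < z i j, 0 < z i2 j & is_walk z i2 s']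
  end.

Definition walk_end (i : 'I_n) (s : seq ('I_m * 'I_n)) : 'I_n :=
  last i (map snd s).

Fixpoint path_pi (v : 'M[R]_(n, m)) (i : 'I_n) (s : seq ('I_m * 'I_n)) : R :=
  match s with
  | [::] => 1
  | (j, i2) :: s' => `|v i j| / `|v i2 j| * path_pi v i2 s'
  end.

Definition deg_chore (z : 'M[R]_(n, m)) (j : 'I_m) : nat :=
  #|[set i : 'I_n | 0 < z i j]|.

Definition zbar (z : 'M[R]_(n, m)) : 'M[R]_(n, m) :=
  \matrix_(i, j) (if 0 < z i j then (deg_chore z j)%:R^-1 else 0).

End Chores.

(* Main.v *)
Require Import Defs.
From HB Require Import structures.
From mathcomp Require Import all_boot all_order all_algebra.
From mathcomp Require Import ring lra.
Import Order.TTheory GRing.Theory Num.Theory.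
Local Open Scope ring_scope.

Theorem proposition4 (R : realFieldType) (n m : nat)
  (v : 'M[R]_(n, m)) (b : 'I_n -> R) (z : 'M[R]_(n, m))
  (hv : forall i j, v i j < 0) (hb : forall i, b i < 0)
  (hz : competitive v b z)
  (i : 'I_n) (P : 'I_n -> seq ('I_m * 'I_n))
  (hP : forall i', i' \in agent_comp z i ->
          is_walk z i (P i') /\ walk_end i (P i') = i') :
  util v i (z i) =
    b i / (\sum_(i' in agent_comp z i) b i') *
    \sum_(i' in agent_comp z i) path_pi v i (P i') * util v i' (zbar z i').
Proof.
case: hz => [[z0 zcol] [p [hp hopt]]].
pose u k := util v k (z k).
pose a k := u k / b k.
have ex_edge : forall k, exists j, 0 < z k j.
  move=> k; case: (boolP [exists j, 0 < z k j]) => [/existsP //|/existsPn H]; exfalso.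
  have : \sum_(j < m) p j * z k j = 0.
    apply: big1 => j _.
    have : z k j = 0 by apply/eqP; rewrite eq_le z0 andbT leNgt H.
    by move->; rewrite mulr0.
  move=> H0; have := (hopt k).1; rewrite H0 => H1.
  by have := hb k; rewrite ltNge H1.
have u_neg : forall k, u k < 0.
  move=> k; case: (ex_edge k) => j0 hj0.
  rewrite /u /util (bigD1 j0) //=.
  have H1 : v k j0 * z k j0 < 0 by rewrite nmulr_rlt0.
  have H2 : \sum_(j < m | j != j0) v k j * z k j <= 0.
    by apply: sumr_le0 => j _; rewrite nmulr_rle0 // ltW.
  lra.
have a_pos : forall k, 0 < a k by move=> k; rewrite /a nmulr_rgt0 // invr_lt0.
have vle : forall k j, v k j <= a k * p j.
  move=> k j.
  pose w := b k / p j.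
  have hw : 0 < w by rewrite /w nmulr_rgt0 // invr_lt0.
  have pj0 : p j != 0 by rewrite lt_eqF.
  have bk0 : b k != 0 by rewrite lt_eqF.
  have Hb : b k = p j * w by rewrite /w mulrC divfK.
  pose x := fun j' : 'I_m => if j' == j then w else 0.
  have hx : forall j', 0 <= x j' by move=> j'; rewrite /x; case: eqP => // _; exact: ltW.
  have sx : forall f : 'I_m -> R, \sum_(j' < m) f j' * x j' = f j * w.
    move=> f; rewrite (bigD1 j) //= /x eqxx big1 ?addr0 // => j' /negbTE ->.
    by rewrite mulr0.
  have := (hopt k).2 x hx; rewrite sx -Hb lexx => /(_ isT).
  rewrite /util sx -/(util v k (z k)) -/(u k).
  have -> : u k = a k * b k by rewrite /a divfK.
  by rewrite Hb mulrA ler_pM2r.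
pose c k := \sum_(j < m) p j * z k j.
have key : forall k, (forall j, 0 < z k j -> v k j = a k * p j) /\ c k = b k.
  move=> k.
  have hab : u k = a k * b k by rewrite /a divfK // lt_eqF.
  have hS : \sum_(j < m) (a k * (p j * z k j) - v k j * z k j) = a k * c k - u k.
    by rewrite sumrB -mulr_sumr.
  have hnn : forall j, 0 <= a k * (p j * z k j) - v k j * z k j.
    move=> j; rewrite mulrA -mulrBl mulr_ge0 // subr_ge0; exact: vle.
  have hS0 : 0 <= a k * c k - u k by rewrite -hS; apply: sumr_ge0 => j _.
  have hc : c k <= b k := (hopt k).1.
  have hak := a_pos k.
  have hcb : c k = b k.
    apply/eqP; rewrite eq_le hc /=.
    have : a k * (b k - c k) <= 0 by rewrite mulrBr -hab; lra.
    by rewrite pmulr_rle0 // subr_le0.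
  split=> // j hj.
  have : a k * c k - u k = 0 by rewrite hcb hab subrr.
  rewrite -hS => /psumr_eq0P H.
  have := H (fun j _ => hnn j) j isT.
  rewrite mulrA -mulrBl => /eqP; rewrite mulf_eq0 (gt_eqF hj) orbF subr_eq0.
  by move/eqP->.
have walk : forall s k, is_walk z k s -> path_pi v k s = a k / a (walk_end k s).
  elim=> [|[j k2] s IH] k /=.
    by move=> _; rewrite /walk_end /= divff // gt_eqF.
  case/and3P=> h1 h2 hw.
  have -> : walk_end k ((j, k2) :: s) = walk_end k2 s by rewrite /walk_end.
  rewrite IH // !ltr0_norm // (key k).1 // (key k2).1 //.
  have := a_pos k2; have := a_pos (walk_end k2 s); have := hp j => H1 H2 H3.
  by field; rewrite (gt_eqF H2) (lt_eqF H1) (gt_eqF H3).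
have ubar : forall k, util v k (zbar z k) =
    a k * \sum_(j < m) (if 0 < z k j then p j / (deg_chore z j)%:R else 0).
  move=> k; rewrite /util mulr_sumr; apply: eq_bigr => j _.
  rewrite /zbar mxE; case: ifP => h; last by rewrite !mulr0.
  by rewrite (key k).1 // mulrA.
set N := agent_comp z i.
have iN : i \in N by rewrite inE connect0.
rewrite [X in _ = _ * X](eq_bigr (fun k => a i * \sum_(j < m)
     (if 0 < z k j then p j / (deg_chore z j)%:R else 0))); last first.
  move=> k hk; have [hw he] := hP k hk.
  by rewrite walk // he ubar mulrA divfK // gt_eqF.
rewrite -mulr_sumr exchange_big /=.
have hS : \sum_(k in N) b k = \sum_(j < m) \sum_(k in N) p j * z k j.
  rewrite exchange_big /=; apply: eq_bigr => k _; by rewrite -(key k).2.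
have Hj : forall j, \sum_(k in N) (if 0 < z k j then p j / (deg_chore z j)%:R else 0)
    = \sum_(k in N) p j * z k j.
  move=> j.
  case: (boolP [exists k in N, 0 < z k j]) => [/exists_inP [k0 hk0N hk0]|/exists_inPn H].
    have inN : forall k, 0 < z k j -> k \in N.
      move=> k hk; move: hk0N; rewrite !inE => hk0N.
      apply: connect_trans hk0N _; apply: (connect_trans (y := inr j)); exact: connect1.
    have ext : forall G : 'I_n -> R, (forall k, k \notin N -> G k = 0) ->
        \sum_(k in N) G k = \sum_k G k.
      move=> G hG; rewrite big_mkcond; apply: eq_bigr => k _; case: ifPn => // hk; by rewrite hG.
    rewrite !ext; first last.
    - move=> k hk; case: ifP => // /inN; by rewrite (negbTE hk).
    - move=> k hk; have : z k j = 0.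
        apply/eqP; rewrite eq_le z0 andbT leNgt; apply/negP => /inN; exact/negP.
      by move->; rewrite mulr0.
    rewrite -mulr_sumr zcol mulr1 -big_mkcond /=.
    rewrite (eq_bigl (fun k => k \in [set k | 0 < z k j])); last by move=> k; rewrite inE.
    rewrite sumr_const (_ : #|[set k | 0 < z k j]| = deg_chore z j) // -[p j / _ *+ _]mulr_natr.
    have hn : (deg_chore z j)%:R != 0 :> R.
      rewrite pnatr_eq0 -lt0n; by apply/card_gt0P; exists k0; rewrite inE.
    by rewrite -mulrA mulVf // mulr1.
  rewrite !big1 // => k hk.
    have : z k j = 0 by apply/eqP; rewrite eq_le z0 andbT leNgt H.
    by move->; rewrite mulr0.
  by rewrite ifF //; apply/negbTE/H.
rewrite (eq_bigr _ (fun j _ => Hj j)) -hS.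
have Sneg : \sum_(k in N) b k < 0.
  rewrite (bigD1 i) //=.
  have : \sum_(k in N | k != i) b k <= 0 by apply: sumr_le0 => k _; exact: ltW.
  have := hb i; lra.
have S0 : \sum_(k in N) b k != 0 by rewrite lt_eqF.
rewrite mulrCA (divfK S0) /a divfK //; by rewrite (lt_eqF (hb i)).
Qed.
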